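(* Let $0<\varepsilon'<1$ and $\varepsilon=\varepsilon'/2$. Algorithm A run on $G$ with parameter $\varepsilon$ terminates and outputs a matching $M$ of $G$ with $w(M)\ge(1-\varepsilon')\,w(M^* )$, where $M^*$ is a maximum weight matching of $G$.
   Context: Let $G=(U\cup V,E)$ be a bipartite graph with real edge weights $w(uv)\ge 1$ for all $uv\in E$, $N(x)$ the neighbourhood of vertex $x$, and $w(F)=\sum_{e\in F}w(e)$. For $0<\varepsilon<1$ let $\mathrm{iLog}(x)=\lfloor\log_{1+\varepsilon}x\rfloor$, $k_{max}=\mathrm{iLog}(\max_{e\in E}w(e))$, $k_{min}$ the smallest integer with $(1+\varepsilon)^{-k_{min}}\le\varepsilon$, and $j_{uv}=\mathrm{iLog}(w(uv))$. Algorithm A (MultiplicativeAuction): set $M=\emptyset$, $y_u=0$ for all $u\in U$, $j_v=k_{max}$ for all $v\in V$. For each $v\in V$ build a queue $Q_v$ containing the pair $(i,uv)$ for every $u\in N(v)$ and every integer $i$ with $-k_{min}\le i\le j_{uv}$, ordered so that the first components are non-increasing (ties arbitrary). Then for each $v\in V$ (in arbitrary order) call $\textsc{MatchR}(v)$, and finally output $M$. Here $\textsc{MatchR}(v)$ is: while $Q_v$ is nonempty: remove the first pair $(j,uv)$ of $Q_v$; set $j_v\leftarrow j$; let $\mathrm{util}(uv)=w(uv)-y_u$ (with the current $y_u$); if $\mathrm{util}(uv)\ge(1+\varepsilon)^j$ then set $y_u\leftarrow y_u+\varepsilon\cdot\mathrm{util}(uv)$, and if $u$ is currently matched in $M$ to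 some $v'$, replace $uv'$ by $uv$ in $M$, call $\textsc{MatchR}(v')$ and then return; otherwise add $uv$ to $M$ and return. (If the test fails, continue the while-loop.) *)

(* Defs.v *)
From HB Require Import structures.
From mathcomp Require Import all_boot all_order all_algebra.
From mathcomp Require Import reals exp.
Set Implicit Arguments. Unset Strict Implicit. Unset Printing Implicit Defensive.
Import Order.TTheory GRing.Theory Num.Theory.
Local Open Scope ring_scope.

Section Auction.
Variables (R : realType) (U V : finType).
Variables (E : U -> V -> bool) (w : U -> V -> R).

Definition iLog (eps x : R) : int := Num.floor (ln x / ln (1 + eps)).

Definition is_kmin (eps : R) (k : int) : Prop :=
  (1 + eps) ^ (- k) <= eps /\
  forall k' : int, (1 + eps) ^ (- k') <= eps -> k <= k'.

Definition wmax : R := \big[Num.max/0]_(p : U * V | E p.1 p.2) w p.1 p.2.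
Definition kmax (eps : R) : int := iLog eps wmax.
Definition juv (eps : R) (u : U) (v : V) : int := iLog eps (w u v).

Definition is_matching (M : {set U * V}) : Prop :=
  (forall p, p \in M -> E p.1 p.2) /\
  (forall p q, p \in M -> q \in M -> p.1 = q.1 -> p = q) /\
  (forall p q, p \in M -> q \in M -> p.2 = q.2 -> p = q).

Definition weight (M : {set U * V}) : R := \sum_(p in M) w p.1 p.2.

Definition is_max_weight_matching (M : {set U * V}) : Prop :=
  is_matching M /\ forall N, is_matching N -> weight N <= weight M.

Definition valid_queue (eps : R) (kmin : int) (v : V) (q : seq (int * U)) : Prop :=
  uniq q /\
  (forall p : int * U, p \in q = [&& E p.2 v, - kmin <= p.1 & p.1 <= juv eps p.2 v]) /\
  sorted (fun a b : int * U => b.1 <= a.1) q.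

Record state := State {
  st_M : {set U * V};
  st_y : U -> R;
  st_j : V -> int;
  st_Q : V -> seq (int * U) }.

Definition upd {A : eqType} {B : Type} (f : A -> B) (a : A) (b : B) : A -> B :=
  fun x => if x == a then b else f x.

(* MatchR(v), with a fuel bound on the total number of loop iterations
   (None = fuel exhausted).  The recursive call MatchR(v') is a tail call. *)
Fixpoint matchR (eps : R) (fuel : nat) (v : V) (s : state) : option state :=
  match fuel with
  | 0%N => None
  | f.+1 =>
    match st_Q s v with
    | [::] => Some s
    | (j, u) :: rest =>
      let s1 := State (st_M s) (st_y s) (upd (st_j s) v j) (upd (st_Q s) v rest) in
      let util := w u v - st_y s1 u in
      if (1 + eps) ^ j <= util then
        let y2 := upd (st_y s1) u (st_y s1 u + eps * util) in
        match [pick v' | (u, v') \in st_M s1] with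
        | Some v' =>
            matchR eps f v'
              (State ((u, v) |: (st_M s1 :\ (u, v'))) y2 (st_j s1) (st_Q s1))
        | None => Some (State ((u, v) |: st_M s1) y2 (st_j s1) (st_Q s1))
        end
      else matchR eps f v s1
    end
  end.

Fixpoint run_all (eps : R) (fuel : nat) (vs : seq V) (s : state) : option state :=
  match vs with
  | [::] => Some s
  | v :: vs' =>
    match matchR eps fuel v s with
    | Some s' => run_all eps fuel vs' s'
    | None => None
    end
  end.

Definition init_state (eps : R) (Q0 : V -> seq (int * U)) : state :=
  State set0 (fun _ => 0) (fun _ => kmax eps) Q0.

Definition multiplicative_auction (eps : R) (Q0 : V -> seq (int * U))
  (vs : seq V) (fuel : nat) : option {set U * V} :=
  match run_all eps fuel vs (init_state eps Q0) with
  | Some s => Some (st_M s)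
  | None => None
  end.

End Auction.

(* Main.v *)
Require Import Defs.
From HB Require Import structures.
From mathcomp Require Import all_boot all_order all_algebra.
From mathcomp Require Import reals exp.
From mathcomp Require Import ring lra zify.
Import Order.TTheory GRing.Theory Num.Theory.
Local Open Scope ring_scope.

Section Proofs.
Set Implicit Arguments. Unset Strict Implicit.
Variables (R : realType) (U V : finType) (E : U -> V -> bool) (w : U -> V -> R).
Variables (eps : R) (kmin : int) (Q0 : V -> seq (int * U)).
Hypothesis hw : forall u v, E u v -> 1 <= w u v.
Hypothesis heps : 0 < eps.
Hypothesis heps1 : eps < 1.
Hypothesis hQ0 : forall v, valid_queue E w eps kmin v (Q0 v).

Local Notation b := (1 + eps).
Local Notation state := (state R U V).

Definition Inv (s : state) : Prop :=
  [/\ is_matching E (st_M s),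
     (forall u, 0 <= st_y s u) /\
     (forall u, (forall v, (u,v) \notin st_M s) -> st_y s u = 0),
     forall v, exists k, st_Q s v = drop k (Q0 v),
     forall v p, p \in Q0 v -> p \notin st_Q s v -> w p.2 v - st_y s p.2 < b ^ p.1 &
     forall u v, (u,v) \in st_M s -> [/\ (1-eps) * b ^ (st_j s v) <= w u v - st_y s u,
        -kmin <= st_j s v & forall p, p \in st_Q s v -> p.1 <= st_j s v]].

Definition Unm (s : state) x := forall u, (u,x) \notin st_M s.

Lemma memQ0 v i u : ((i,u) \in Q0 v) = [&& E u v, -kmin <= i & i <= juv w eps u v].
Proof. by case: (hQ0 v) => _ [-> _]. Qed.

Lemma queue_facts s x j u rest : Inv s -> st_Q s x = (j,u)::rest ->
  [/\ (j,u) \in Q0 x, (exists k, rest = drop k (Q0 x)) & forall p, p \in rest -> p.1 <= j].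
Proof.
case=> _ _ H4 _ _ Hq; have [k Hk] := H4 x.
have hs : sorted (fun a b : int * U => b.1 <= a.1) ((j,u)::rest).
  by rewrite -Hq Hk; apply: drop_sorted; case: (hQ0 x) => _ [].
split.
- by apply: (mem_drop (n0:=k)); rewrite -Hk Hq mem_head.
- by exists (1 + k)%N; rewrite -drop_drop -Hk Hq /= drop0.
- move=> p hp.
  have := order_path_min _ hs.
  have tr : transitive (fun a b : int * U => b.1 <= a.1).
    by move=> a1 a2 a3 h1 h2; apply: le_trans h2 h1.
  by move=> /(_ tr) /allP /(_ p hp).
Qed.

Lemma upd_eq {A : eqType} {B : Type} (f : A -> B) a c : upd f a c a = c.
Proof. by rewrite /upd eqxx. Qed.
Lemma upd_neq {A : eqType} {B : Type} (f : A -> B) a c x : x != a -> upd f a c x = f x.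
Proof. by rewrite /upd => /negbTE ->. Qed.

Lemma fail_inv s x j u rest : Inv s -> Unm s x -> st_Q s x = (j,u)::rest ->
  ~~ (b ^ j <= w u x - st_y s u) ->
  Inv (State (st_M s) (st_y s) (upd (st_j s) x j) (upd (st_Q s) x rest)).
Proof.
move=> I Hx Hq Hf; have [Q0m [k Hk] Hle] := @queue_facts s x j u rest I Hq.
case: I => H1 H23 H4 H5 H6; split => //=.
- move=> v; case: (eqVneq v x) => [->|nv]; first by rewrite upd_eq; exists k.
  by rewrite upd_neq.
- move=> v p; case: (eqVneq v x) => [->|nv] hp; last by rewrite upd_neq //; apply: H5.
  rewrite upd_eq => hr.
  case: (boolP (p \in st_Q s x)) => hq; last by apply: H5.
  move: hq; rewrite Hq in_cons (negbTE hr) orbF => /eqP -> /=.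
  by rewrite ltNge.
- move=> u' v hm; case: (eqVneq v x) => [ev|nv]; first by move: (Hx u'); rewrite -ev hm.
  by rewrite !upd_neq //; apply: H6.
Qed.


Lemma b_gt1 : 1 < b.
Proof. by rewrite ltrDl. Qed.
Lemma b_gt0 : 0 < b.
Proof. exact: lt_trans ltr01 b_gt1. Qed.

Lemma iLog_ge0 x : 1 <= x -> 0 <= iLog eps x.
Proof.
move=> hx; rewrite /iLog floor_ge0 divr_ge0 //; first exact: ln_ge0.
by apply: ln_ge0; apply: ltW; apply: b_gt1.
Qed.

Lemma iLog_lt x : 1 <= x -> x < b ^ (iLog eps x + 1).
Proof.
move=> hx; have := iLog_ge0 hx.
have hlb : 0 < ln b by apply: ln_gt0; apply: b_gt1.
have hfl := floorD1_gt (ln x / ln b).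
rewrite /iLog in hfl *.
set z := Num.floor _ in hfl *.
move=> hz; have : 0 <= z + 1 by rewrite addr_ge0.
case: (z + 1) hfl => [n|n] hfl _ //.
change (x < b ^+ n).
have hx0 : 0 < x by apply: lt_le_trans ltr01 hx.
rewrite -ltr_ln ?posrE ?exprn_gt0 ?b_gt0 // lnXn ?b_gt0 // -mulr_natl.
by rewrite -ltr_pdivrMr.
Qed.

Lemma util_lt s x j u rest : Inv s -> st_Q s x = (j,u)::rest ->
  w u x - st_y s u < b ^ (j + 1).
Proof.
move=> I Hq; have [Q0m _ Hle] := @queue_facts s x j u rest I Hq.
have I' := I; case: I' => _ [Hy0 _] _ H5 _.
move: (Q0m); rewrite memQ0 => /and3P [Eux hk hj].
case: (ltP (j + 1) (juv w eps u x + 1)) => hc.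
- have hp : (j + 1, u) \in Q0 x.
    by rewrite memQ0 Eux /=; apply/andP; split; lia.
  have hnq : (j + 1, u) \notin st_Q s x.
    rewrite Hq in_cons negb_or; apply/andP; split.
      by apply/eqP => -[]; lia.
    by apply/negP => /Hle /=; lia.
  exact: (H5 x _ hp hnq).
- have hj' : j = juv w eps u x.
    lia.
  rewrite hj'; apply: le_lt_trans (iLog_lt (hw Eux)).
  by rewrite lerBlDr lerDl Hy0.
Qed.

Lemma succ_inv s x j u rest (M0 : {set U * V}) : Inv s -> Unm s x ->
  st_Q s x = (j,u)::rest -> (b ^ j <= w u x - st_y s u) ->
  {subset M0 <= st_M s} -> (forall p, p \in M0 -> p.1 != u) ->
  (forall p, p \in st_M s -> p.1 != u -> p \in M0) ->
  Inv (State ((u,x) |: M0) (upd (st_y s) u (st_y s u + eps * (w u x - st_y s u)))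
     (upd (st_j s) x j) (upd (st_Q s) x rest)).
Proof.
move=> I Hx Hq Hs HM0 HM0u HM0c.
have [Q0m [k Hk] Hle] := @queue_facts s x j u rest I Hq.
have Hlt := util_lt I Hq.
move: (Q0m); rewrite memQ0 => /and3P [Eux hk hj].
set util := w u x - st_y s u in Hs Hlt *.
have hu0 : 0 < util by apply: lt_le_trans Hs; apply: exprz_gt0; apply: b_gt0.
case: I => HM [Hy0 Hy1] H4 H5 H6; case: HM => He [H1 H2].
have hy2 : forall u', st_y s u' <= upd (st_y s) u (st_y s u + eps * util) u'.
  move=> u'; case: (eqVneq u' u) => [->|nu]; last by rewrite upd_neq.
  by rewrite upd_eq lerDl mulr_ge0 // ltW.
split => /=.
- split; [|split].
  + move=> p; rewrite in_setU1 => /orP [/eqP -> //|/HM0]; exact: He.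
  + move=> p q; rewrite !in_setU1 => /orP [/eqP ->|hp] /orP [/eqP ->|hq] //= e.
    * by move: (HM0u _ hq); rewrite -e eqxx.
    * by move: (HM0u _ hp); rewrite e eqxx.
    * exact: H1 (HM0 _ hp) (HM0 _ hq) e.
  + move=> p q; rewrite !in_setU1 => /orP [/eqP ->|hp] /orP [/eqP ->|hq] //= e.
    * by move: (Hx q.1) (HM0 _ hq); rewrite e -surjective_pairing => /negbTE ->.
    * by move: (Hx p.1) (HM0 _ hp); rewrite -e -surjective_pairing => /negbTE ->.
    * exact: H2 (HM0 _ hp) (HM0 _ hq) e.
- split.
  + move=> u'; apply: le_trans (hy2 u'); exact: Hy0.
  + move=> u' hn; case: (eqVneq u' u) => [eu|nu].
      by move: (hn x); rewrite eu in_setU1 eqxx.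
    rewrite upd_neq //; apply: Hy1 => v; apply/negP => hm.
    by move: (hn v); rewrite in_setU1 (HM0c _ hm) ?orbT.
- move=> v; case: (eqVneq v x) => [->|nv]; first by rewrite upd_eq; exists k.
  by rewrite upd_neq.
- move=> v p; case: (eqVneq v x) => [->|nv] hp; last first.
    rewrite upd_neq // => hq; apply: le_lt_trans (H5 v p hp hq).
    by rewrite lerD2l lerN2.
  rewrite upd_eq => hr.
  case: (boolP (p \in st_Q s x)) => hq; last first.
    apply: le_lt_trans (H5 x p hp hq).
    by rewrite lerD2l lerN2.
  move: hq; rewrite Hq in_cons (negbTE hr) orbF => /eqP -> /=.
  rewrite upd_eq.
  have -> : w u x - (st_y s u + eps * util) = (1 - eps) * util.
    by rewrite /util; ring.
  apply: (@lt_le_trans _ _ ((1 - eps) * b ^ (j + 1))).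
    by rewrite ltr_pM2l // subr_gt0.
  rewrite expfzDr ?expr1z; last by rewrite gt_eqF // b_gt0.
  have hB : 0 < b ^ j by apply: exprz_gt0; apply: b_gt0.
  move: hB; set B := b ^ j => hB; nra.
- move=> u' v; rewrite in_setU1 => /orP [/eqP [eu ev]|hm].
    rewrite eu ev !upd_eq; split => //.
    * have -> : w u x - (st_y s u + eps * util) = (1 - eps) * util.
        by rewrite /util; ring.
      by rewrite ler_wpM2l // subr_ge0 ltW.
  have nu := HM0u _ hm; have hm' := HM0 _ hm.
  have nv : v != x by apply/eqP => ev; move: (Hx u'); rewrite -ev hm'.
  by rewrite !upd_neq //; apply: H6.
Qed.


Definition Good (s : state) (A : V -> Prop) :=
  forall v, A v -> (exists u, (u,v) \in st_M s) \/ st_Q s v = [::].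
Definition tot (s : state) := (\sum_(v : V) size (st_Q s v))%N.

Lemma sum_upd (f : V -> seq (int * U)) x r :
  (\sum_(v : V) size (upd f x r v) + size (f x) = \sum_(v : V) size (f v) + size r)%N.
Proof.
rewrite (bigD1 x) //= [X in _ = (X + _)%N](bigD1 x) //= upd_eq.
rewrite (eq_bigr (fun v => size (f v))); last by move=> v hv; rewrite upd_neq.
lia.
Qed.

Lemma matchR_ok f : forall x s (A : V -> Prop), Inv s -> Unm s x -> Good s A ->
  (tot s < f)%N ->
  exists s', matchR w eps f x s = Some s' /\ Inv s' /\ Good s' (fun v => A v \/ v = x)
    /\ (tot s' <= tot s)%N
    /\ (forall v, (exists u, (u,v) \in st_M s') -> (exists u, (u,v) \in st_M s) \/ v = x).
Proof.
elim: f => [|f IH] x s A I Hx G Ht //=.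
case eQ: (st_Q s x) => [|[j u] rest].
  exists s; split=> //; split=> //; split.
    by move=> v [Av|->]; [exact: G | right].
  by split=> // v hv; left.
have Htot : (tot (State (st_M s) (st_y s) (upd (st_j s) x j) (upd (st_Q s) x rest)) < tot s)%N.
  have := sum_upd (st_Q s) x rest; rewrite eQ /= /tot /=; lia.
have Hf : (tot (State (st_M s) (st_y s) (upd (st_j s) x j) (upd (st_Q s) x rest)) < f)%N.
  by apply: leq_trans Htot _; rewrite -ltnS.
have I' := I; case: I' => [[He [H1 H2]]] _ _ _ _.
have [Q0m _ _] := @queue_facts s x j u rest I eQ.
case: ifP => Hs.
- case: pickP => [v' Hv'|Hn].
  + set M0 := st_M s :\ (u, v').
    have HM0 : {subset M0 <= st_M s} by move=> p; rewrite in_setD1 => /andP [].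
    have HM0u : forall p, p \in M0 -> p.1 != u.
      move=> p; rewrite in_setD1 => /andP [hne hp]; apply/eqP => e.
      by move: hne; rewrite (H1 _ _ hp Hv' e) eqxx.
    have HM0c : forall p, p \in st_M s -> p.1 != u -> p \in M0.
      move=> p hp hne; rewrite in_setD1 hp andbT; apply/eqP => e.
      by move: hne; rewrite e eqxx.
    have I2 := succ_inv I Hx eQ Hs HM0 HM0u HM0c.
    set s2 := State _ _ _ _ in I2.
    have Hx2 : Unm s2 v'.
      move=> q; rewrite /s2 /= in_setU1; apply/negP => /orP [/eqP [_ e]|hq].
        by move: (Hx u); rewrite -e Hv'.
      move: (hq); rewrite in_setD1 => /andP [hne hq'].
      by move: hne; rewrite (H2 _ _ hq' Hv' erefl) eqxx.
    have G2 : Good s2 (fun v => (A v \/ v = x) /\ v <> v').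
      move=> v [[Av|ev] nv].
      - case: (eqVneq v x) => [ev|nvx].
          by left; exists u; rewrite /s2 /= in_setU1 ev eqxx.
        case: (G v Av) => [[u0 hu0]|hq].
          left; exists u0; rewrite /s2 /= in_setU1 in_setD1 hu0 andbT.
          by apply/orP; right; apply/eqP => -[_ e]; apply: nv.
        by right; rewrite /s2 /= upd_neq.
      - by left; exists u; rewrite /s2 /= in_setU1 ev eqxx.
    have [s' [-> [I' [G' [T' M']]]]] := IH v' s2 _ I2 Hx2 G2 Hf.
    exists s'; split=> //; split=> //; split.
      move=> v Av; apply: G'.
      case: (eqVneq v v') => [->|nv]; first by right.
      by left; split=> //; apply/eqP.
    split; first exact: leq_trans T' (ltnW Htot).
    move=> v hv; case: (M' v hv) => [[q hq]|ev].
      move: hq; rewrite /s2 /= in_setU1 => /orP [/eqP [_ ->]|hq]; first by right.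
      by left; exists q; apply: HM0.
    by left; exists u; rewrite ev.
  + have HM0u : forall p, p \in st_M s -> p.1 != u.
      move=> p hp; apply/eqP => e; move: (Hn p.2).
      by rewrite /= -e -surjective_pairing hp.
    have I2 := succ_inv I Hx eQ Hs (fun p h => h) HM0u (fun p h _ => h).
    eexists; split; first reflexivity.
    split; first exact: I2.
    split.
      move=> v Av; case: (eqVneq v x) => [ev|nvx].
        by left; exists u; rewrite /= in_setU1 ev eqxx.
      case: Av => [Av|ev]; last by move: nvx; rewrite ev eqxx.
      case: (G v Av) => [[u0 hu0]|hq].
        by left; exists u0; rewrite /= in_setU1 hu0 orbT.
      by right; rewrite /= upd_neq.
    split; first exact: ltnW.
    move=> v [q]; rewrite /= in_setU1 => /orP [/eqP [_ ->]|hq]; first by right.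
    by left; exists q.
- have I1 := fail_inv I Hx eQ (negbT Hs).
  set s1 := State _ _ _ _ in I1 Hf Htot.
  have G1 : Good s1 (fun v => A v /\ v <> x).
    move=> v [Av nv]; case: (G v Av) => [h|hq]; first by left.
    by right; rewrite /s1 /= upd_neq //; apply/eqP.
  have [s' [-> [I' [G' [T' M']]]]] := IH x s1 _ I1 Hx G1 Hf.
  exists s'; split=> //; split=> //; split.
    move=> v Av; apply: G'.
    case: (eqVneq v x) => [->|nv]; first by right.
    left; case: Av => [Av|ev]; last by move: nv; rewrite ev eqxx.
    by split=> //; apply/eqP.
  split; first exact: leq_trans T' (ltnW Htot).
  exact: M'.
Qed.


Lemma run_all_ok f vs : forall s (A : V -> Prop), Inv s -> Good s A -> uniq vs ->
  (forall v, v \in vs -> Unm s v) -> (tot s < f)%N ->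
  exists s', run_all w eps f vs s = Some s' /\ Inv s' /\ Good s' (fun v => A v \/ v \in vs).
Proof.
elim: vs => [|v vs IH] s A I G Hu Hun Ht /=.
  by exists s; split=> //; split=> // v [Av|//]; exact: G.
move: Hu => /andP [nv Hu].
have [s1 [-> [I1 [G1 [T1 M1]]]]] := matchR_ok I (Hun v (mem_head _ _)) G Ht.
have Hun1 : forall v', v' \in vs -> Unm s1 v'.
  move=> v' hv' q; apply/negP => hq.
  case: (M1 v' (ex_intro _ q hq)) => [[q' hq']|ev].
    by move: (Hun v'); rewrite in_cons hv' orbT => /(_ isT q'); rewrite hq'.
  by move: nv; rewrite -ev hv'.
have [s' [-> [I' G']]] := IH s1 _ I1 G1 Hu Hun1 (leq_ltn_trans T1 Ht).
exists s'; split=> //; split=> // v' Av; apply: G'.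
case: Av => [Av|]; first by left; left.
rewrite in_cons => /orP [/eqP ->|h]; first by left; right.
by right.
Qed.


Lemma sum_fst_le (N : {set U * V}) (f : U -> R) : {in N &, injective fst} ->
  (forall u, 0 <= f u) -> \sum_(p in N) f p.1 <= \sum_(u : U) f u.
Proof.
move=> inj f0; rewrite -(big_imset _ inj) /= big_mkcond /=.
by apply: ler_sum => u _; case: ifP.
Qed.

Lemma sum_snd_le (N : {set U * V}) (f : V -> R) : {in N &, injective snd} ->
  (forall v, 0 <= f v) -> \sum_(p in N) f p.2 <= \sum_(v : V) f v.
Proof.
move=> inj f0; rewrite -(big_imset _ inj) /= big_mkcond /=.
by apply: ler_sum => u _; case: ifP.
Qed.

Lemma sum_fst_eq (N : {set U * V}) (f : U -> R) : {in N &, injective fst} ->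
  (forall u, (forall v, (u,v) \notin N) -> f u = 0) -> \sum_(p in N) f p.1 = \sum_(u : U) f u.
Proof.
move=> inj f0; rewrite -(big_imset _ inj) /= big_mkcond /=.
apply: eq_bigr => u _; case: ifP => // hn; symmetry; apply: f0 => v; apply/negP => h.
by move: hn; rewrite (imset_f fst h).
Qed.

Lemma sum_snd_eq (N : {set U * V}) (f : V -> R) : {in N &, injective snd} ->
  (forall v, (forall u, (u,v) \notin N) -> f v = 0) -> \sum_(p in N) f p.2 = \sum_(v : V) f v.
Proof.
move=> inj f0; rewrite -(big_imset _ inj) /= big_mkcond /=.
apply: eq_bigr => v _; case: ifP => // hn; symmetry; apply: f0 => u; apply/negP => h.
by move: hn; rewrite (imset_f snd h).
Qed.

Hypothesis hkmin : b ^ (- kmin) <= eps.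

Lemma kmin_ge0 : 0 <= kmin.
Proof.
case: (leP 0 kmin) => // hk.
have : b ^ 0 <= b ^ (- kmin) by rewrite ler_eXz2l ?b_gt1 // oppr_ge0 ltW.
rewrite expr0z => h; by move: (le_trans h hkmin); rewrite leNgt heps1.
Qed.

Definition Dv (s : state) v : R :=
  if [pick u | (u,v) \in st_M s] is Some u then w u v - st_y s u else 0.

Lemma Dv_match s u v : is_matching E (st_M s) -> (u,v) \in st_M s -> Dv s v = w u v - st_y s u.
Proof.
move=> [_ [_ H2]] h; rewrite /Dv; case: pickP => [u' hu'|hn]; last by move: (hn u); rewrite h.
by have [->] := H2 _ _ hu' h erefl.
Qed.

Lemma Dv_ge0 s v : Inv s -> 0 <= Dv s v.
Proof.
case=> HM _ _ _ H6; rewrite /Dv; case: pickP => [u hu|//].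
have [h _ _] := H6 _ _ hu; apply: le_trans h; rewrite mulr_ge0 // ?subr_ge0 ?ltW //.
by apply: exprz_gt0; apply: b_gt0.
Qed.

Lemma edge_bound s u v : Inv s -> Good s (fun _ => True) -> E u v ->
  (1 - eps) * w u v <= b * (st_y s u + Dv s v).
Proof.
move=> I G Euv; have I0 := I; case: I0 => HM [Hy0 _] _ H5 H6.
have hw1 := hw Euv; have hy := Hy0 u.
rewrite /Dv; case: pickP => [u0 hu0|hn].
- have [h1 h2 h3] := H6 _ _ hu0.
  set jv := st_j s v in h1 h2 h3.
  have hlt : w u v - st_y s u < b ^ (jv + 1).
    case: (ltP jv (juv w eps u v)) => hc.
    + have hp : (jv + 1, u) \in Q0 v by rewrite memQ0 Euv /=; apply/andP; split; lia.
      have hnq : (jv + 1, u) \notin st_Q s v by apply/negP => /h3 /=; lia.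
      exact: (H5 v _ hp hnq).
    + apply: (@le_lt_trans _ _ (w u v)); first by rewrite lerBlDr lerDl.
      apply: lt_le_trans (iLog_lt hw1) _; rewrite ler_eXz2l ?b_gt1 //.
      rewrite /juv in hc; lia.
  move: hlt; rewrite expfzDr ?expr1z; last by rewrite gt_eqF // b_gt0.
  have hB : 0 < b ^ jv by apply: exprz_gt0; apply: b_gt0.
  move: hB h1; set B := b ^ jv; set D := w u0 v - st_y s u0 => hB h1 hlt.
  have p1 : (1 - eps) * (w u v - st_y s u) <= (1 - eps) * (B * b).
    by apply: ler_wpM2l; [rewrite subr_ge0 ltW | exact: ltW].
  have p2 : b * ((1 - eps) * B) <= b * D by apply: ler_wpM2l; [exact: (ltW b_gt0) | exact: h1].
  have p3 : 0 <= eps * st_y s u by apply: mulr_ge0; [exact: ltW | exact: hy].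
  lra.
- have hQ : st_Q s v = [::].
    case: (G v Logic.I) => [[u1 hu1]|//]; by move: (hn u1); rewrite hu1.
  have hp : (- kmin, u) \in Q0 v.
    rewrite memQ0 Euv /=; apply/andP; split => //.
    have := iLog_ge0 hw1; have := kmin_ge0; rewrite /juv; lia.
  have := H5 v _ hp; rewrite hQ => /(_ isT) /= hlt.
  have h1 := le_trans (ltW hlt) hkmin.
  have p1 : eps * 1 <= eps * w u v by apply: ler_wpM2l; [exact: ltW | exact: hw1].
  have p3 : 0 <= eps * st_y s u by apply: mulr_ge0; [exact: ltW | exact: hy].
  lra.
Qed.

Lemma final_bound s N : Inv s -> Good s (fun _ => True) -> is_matching E N ->
  (1 - eps) * weight w N <= b * weight w (st_M s).
Proof.
move=> I G HN; have I' := I; case: I' => HM [Hy0 Hy1] _ _ _.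
have injM1 : {in st_M s &, injective fst} by move=> p q hp hq; case: HM => _ [H1 _]; exact: H1.
have injM2 : {in st_M s &, injective snd} by move=> p q hp hq; case: HM => _ [_ H2]; exact: H2.
have injN1 : {in N &, injective fst} by move=> p q hp hq; case: HN => _ [H1 _]; exact: H1.
have injN2 : {in N &, injective snd} by move=> p q hp hq; case: HN => _ [_ H2]; exact: H2.
have eqM : weight w (st_M s) = \sum_(u : U) st_y s u + \sum_(v : V) Dv s v.
  rewrite -(sum_fst_eq (f := st_y s) injM1 Hy1).
  rewrite -(sum_snd_eq (f := Dv s) injM2); last first.
    move=> v hv; rewrite /Dv; case: pickP => [u hu|//]; by move: (hv u); rewrite hu.
  rewrite -big_split /=; apply: eq_bigr => p hp.
  by case: p hp => a c hp /=; rewrite (Dv_match HM hp); ring.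
rewrite eqM /weight mulr_sumr.
apply: (@le_trans _ _ (\sum_(p in N) b * (st_y s p.1 + Dv s p.2))).
  apply: ler_sum => p hp; apply: edge_bound => //; case: HN => He _; exact: He.
rewrite -mulr_sumr big_split /=; apply: ler_wpM2l; first exact: (ltW b_gt0).
apply: lerD; first exact: sum_fst_le.
by apply: sum_snd_le => // v; apply: Dv_ge0.
Qed.

End Proofs.

Theorem lemma2 (R : realType) (U V : finType) (E : U -> V -> bool)
  (w : U -> V -> R) (hw : forall u v, E u v -> 1 <= w u v)
  (eps' : R) (heps' : 0 < eps' < 1) (kmin : int)
  (hkmin : is_kmin (eps' / 2) kmin)
  (Q0 : V -> seq (int * U))
  (hQ0 : forall v, valid_queue E w (eps' / 2) kmin v (Q0 v))
  (vs : seq V) (hvs : perm_eq vs (enum V)) :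
  exists (fuel : nat) (M : {set U * V}),
    multiplicative_auction E w (eps' / 2) Q0 vs fuel = Some M /\
    is_matching E M /\
    forall Mstar, is_max_weight_matching E w Mstar ->
      (1 - eps') * weight w Mstar <= weight w M.
Proof.
have heps : 0 < eps' / 2 by case/andP: heps' => h1 h2; lra.
have heps1 : eps' / 2 < 1 by case/andP: heps' => h1 h2; lra.
case: hkmin => hk _.
set s0 := init_state E w (eps' / 2) Q0.
have I0 : Inv E w (eps' / 2) kmin Q0 s0.
  split => /=.
  - split; first by move=> p; rewrite in_set0.
    by split=> p q; rewrite in_set0.
  - by split.
  - by move=> v; exists 0%N; rewrite drop0.
  - by move=> v p ->.
  - by move=> u v; rewrite in_set0.
have G0 : Good s0 (fun _ => False) by [].
have Hu : uniq vs by rewrite (perm_uniq hvs) enum_uniq.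
have Hun : forall v, v \in vs -> Unm s0 v by move=> v _ u; rewrite /s0 /= in_set0.
have [s' [Hr [I' G']]] := run_all_ok hw heps heps1 hQ0 I0 G0 Hu Hun (ltnSn (tot s0)).
exists (tot s0).+1, (st_M s'); rewrite /multiplicative_auction -/s0 Hr.
split => //; split; first by case: I'.
move=> Mstar [HMs _].
have G'' : Good s' (fun _ => True).
  by move=> v _; apply: G'; right; rewrite (perm_mem hvs) mem_enum.
have := final_bound hw heps heps1 hQ0 hk I' G'' HMs.
have hN : 0 <= weight w Mstar.
  apply: sumr_ge0 => p hp; case: HMs => He _.
  by apply: le_trans (hw _ _ (He _ hp)).
case/andP: heps' => h1 h2.
set N := weight w Mstar; set M := weight w (st_M s') => h.
have p1 : 0 <= eps' * (eps' * N) by apply: mulr_ge0; [exact: ltW | apply: mulr_ge0 => //; exact: ltW].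
have hX : (1 + eps' / 2) * ((1 - eps') * N - M) <= 0 by lra.
rewrite pmulr_rle0 in hX; first by lra.
lra.
Qed.
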